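(* There is a function $f:\mathbb{N}\to\mathbb{N}$ such that the following holds. Let $p$ be a prime, $P$ a finite $p$-group, $m$ a positive integer, and $A$ a $p'$-group of automorphisms of $P$. If $|[P,a]|\le m$ for every $a\in A$, then $|A|\le f(m)$ and $|[P,A]|\le f(m)$.
   Context: $[P,a]=\langle x^{-1}x^{a}: x\in P\rangle$ and $[P,A]=\langle x^{-1}x^{a}: x\in P, a\in A\rangle$. A $p'$-group is a finite group of order coprime to $p$. *)

(* Defs.v *)
From mathcomp Require Import all_boot all_fingroup all_solvable.
Set Implicit Arguments. Unset Strict Implicit. Unset Printing Implicit Defensive.
Local Open Scope group_scope.

(* [P, a] = < x^-1 x^a : x in P >, for an automorphism a of P given as a
   permutation of the ambient group type (x^a written a x). *)
Definition commAut (gT : finGroupType) (P : {set gT}) (a : {perm gT}) : {set gT} :=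
  <<[set x^-1 * a x | x in P]>>.

Definition commAutS (gT : finGroupType) (P : {set gT}) (A : {set {perm gT}}) : {set gT} :=
  <<[set x^-1 * (a : {perm gT}) x | x : gT in P, a : {perm gT} in A]>>.

(* Main.v *)
Require Import Defs.
From mathcomp Require Import all_boot all_fingroup all_solvable.
From mathcomp Require Import zify.
Set Implicit Arguments. Unset Strict Implicit. Unset Printing Implicit Defensive.
Local Open Scope group_scope.

Section Internal.
Variable gT : finGroupType.
Implicit Types (D K N X : {group gT}).

Lemma fix_comm (p : nat) X (b : gT) : p.-group X -> b \in 'N(X) -> p^'.-elt b ->
  [set [~ x, b] | x in X] \subset 'C[b] -> b \in 'C(X).
Proof.
move=> pX nXb p'b sC; apply/centP=> x Xx.
set y := [~ x, b].
have Xy : y \in X by rewrite /y commgEl groupM ?groupV ?memJ_norm.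
have cyb : y ^ b = y.
  have : y \in 'C[b] by apply: (subsetP sC); apply: imset_f.
  by move/cent1P; rewrite /commute => h; rewrite conjgE h mulKg.
have ex : forall k, x ^ (b ^+ k) = x * y ^+ k.
  elim=> [|k IH]; first by rewrite expg0 conjg1 mulg1.
  by rewrite expgSr conjgM IH conjMg conjXg cyb conjg_mulR expgS [RHS]mulgA.
have y1 : y ^+ #[b] = 1.
  by have := ex #[b]; rewrite expg_order conjg1 => h; apply: (mulgI x); rewrite mulg1 -h.
have oy : #[y] = 1%N.
  apply: (@pnat_1 p); first exact: mem_p_elt pX Xy.
  by apply: pnat_dvd p'b; rewrite order_dvdn y1.
have : y = 1 by apply/eqP; rewrite -order_eq1 oy.
by move/eqP/conjg_fixP => h; rewrite /commute -{1}h conjgE mulKVg.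
Qed.

Lemma C1 (p : nat) D (b : gT) : p.-group D -> b \in 'N(D) -> p^'.-elt b ->
  D \subset [~: D, <[b]>] * 'C_D[b].
Proof.
move=> pD nDb p'b.
have nDB : <[b]> \subset 'N(D) by rewrite cycle_subG.
have sHD : [~: D, <[b]>] \subset D by rewrite commg_subl.
have nHB : <[b]> \subset 'N([~: D, <[b]>]) by apply: commg_normr.
have nHD : D \subset 'N([~: D, <[b]>]) by apply: commg_norml.
have co : coprime #|D| #|<[b]>| by apply: (pnat_coprime pD); rewrite -orderE.
have E := coprime_quotient_cent sHD nHB co (pgroup_sol pD).
rewrite -quotientSK // -cent_cycle E subsetI subxx /=.
by rewrite quotient_cents2r.
Qed.

Lemma index_cent K N : K \subset 'N(N) -> #|K : 'C_K(N)| <= #|N|`!.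
Proof.
move=> nNK.
have -> : #|K : 'C_K(N)| = #|conj_aut N @* K|.
  rewrite card_morphim ker_conj_aut indexgI.
  by rewrite (setIidPr nNK) -indexgI.
apply: leq_trans (subset_leq_card (Aut_conj_aut N K)) _.
rewrite -card_perm; apply: subset_leq_card; apply/subsetP=> a.
by rewrite inE => /andP[].
Qed.

Lemma commg_cycle_sub (G : {group gT}) (b : gT) : b \in 'N(G) ->
  [~: G, <[b]>] \subset [~: G, [set b]].
Proof.
move=> nGb.
have nHG : G \subset 'N([~: G, [set b]]) by apply: commg_norml.
have nHb : b \in 'N([~: G, [set b]]).
  rewrite -sub1set; apply: normsR; first by rewrite sub1set.
  apply: subset_trans (cent_sub _); by rewrite sub1set; apply/centP=> y /set1P ->.
rewrite -quotient_cents2 ?cycle_subG //.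
rewrite quotient_cycle // cent_cycle.
have := @quotient_cents2r _ G [set b] [~: G, [set b]]%G (subxx _).
by rewrite quotient_set1 // cent_set1.
Qed.

Section Abelian.
Variables (p : nat) (P B : {group gT}) (m : nat).
Hypotheses (pP : p.-group P) (p'B : p^'.-group B) (cBB : abelian B)
  (nPB : B \subset 'N(P)) (faith : 'C_B(P) = 1)
  (hm : forall c, c \in B -> #|[~: P, <[c]>]| <= m).

Definition Tg (W : {set gT}) (c : gT) := <<[set [~ w, c] | w in W]>>%G.

Lemma conj_cent (A : {set gT}) x y : x \in 'C(A) -> y \in A -> y ^ x = y.
Proof. by move=> /centP h Ay; rewrite conjgE -(h _ Ay) mulKg. Qed.

Lemma process n : forall (D K : {group gT}) (W : {set gT}) (c : gT) (j : nat),
  #|D| <= n ->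
  D \subset P -> B \subset 'N(D) ->
  K \subset B -> #|B| <= #|K| * (m`!) ^ j ->
  W \subset P -> K \subset 'C(W) -> c \in B -> (forall w, w \in W -> w ^ c \in W) ->
  c \in 'C(D) ->
  2 ^ j * #|Tg W c :&: D| <= #|Tg W c| ->
  P \subset <<W :|: D>> ->
  #|B| <= (m`!) ^ m.
Proof.
elim: n => [|n IH] D K W c j.
  by rewrite leqn0 => /eqP h; have := cardG_gt0 D; rewrite h.
move=> leDn sDP nDB sKB leB sWP cWK Bc WcW cDc hT sPWD.
have TsubP : Tg W c \subset [~: P, <[c]>].
  rewrite gen_subG; apply/subsetP=> _ /imsetP[w Ww ->].
  by rewrite mem_commg ?cycle_id // (subsetP sWP).
case: (boolP (K \subset 'C(D))) => [cDK | /subsetPn[b Kb nCb]].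
  have K1 : (K :=: 1).
    apply/trivgP; rewrite -faith subsetI sKB.
    apply: subset_trans (centS sPWD); rewrite cent_gen centU subsetI cWK.
    exact: cDK.
  have j_le : 2 ^ j <= m.
    apply: leq_trans (hm Bc); apply: leq_trans (subset_leq_card TsubP).
    apply: leq_trans hT; rewrite leq_pmulr //; exact: cardG_gt0.
  move: leB; rewrite K1 cards1 mul1n => leB; apply: leq_trans leB _.
  rewrite leq_pexp2l ?fact_gt0 //.
  by apply: leq_trans j_le; apply: ltnW; apply: ltn_expl.
have Bb : b \in B := subsetP sKB b Kb.
have nDb : b \in 'N(D) := subsetP nDB b Bb.
have p'b : p^'.-elt b := mem_p_elt p'B Bb.
have pD : p.-group D := pgroupS sDP pP.
set N := [~: D, <[b]>]%G.
have sND : N \subset D by rewrite commg_subl cycle_subG.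
have sNP : N \subset P := subset_trans sND sDP.
have pN : p.-group N := pgroupS sND pD.
have cbB : B \subset 'C[b] by rewrite sub_cent1 (subsetP cBB).
have nNB : B \subset 'N(N).
  apply: normsR => //; apply: subset_trans (cent_sub _).
  by rewrite cent_cycle.
set D' := 'C_D[b]%G.
have sD'D : D' \subset D by apply: subsetIl.
have cD'b : b \in 'C(D') by rewrite -sub_cent1 subsetIr.
set K' := 'C_K(N)%G.
have sK'K : K' \subset K by apply: subsetIl.
have [n0 Nn0 nCz] : exists2 n0, n0 \in N & [~ n0, b] \notin 'C[b].
  case: (boolP ([set [~ x, b] | x in N] \subset 'C[b])) => [h | ].
    exfalso; have cNb := fix_comm pN (subsetP nNB b Bb) p'b h.
    move/negP: nCb; apply; apply: fix_comm pD nDb p'b _.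
    apply/subsetP=> _ /imsetP[x Dx ->].
    have : [~ x, b] \in N by rewrite mem_commg ?cycle_id.
    by apply: subsetP; rewrite sub_cent1.
  by case/subsetPn=> _ /imsetP[x Nx ->] h; exists x.
have cWb : b \in 'C(W) := subsetP cWK b Kb.
have fixW : forall w, w \in W -> w ^ (c * b) = w ^ c.
  by move=> w Ww; rewrite conjgM (conj_cent cWb (WcW w Ww)).
have fixN : forall x, x \in N -> x ^ (c * b) = x ^ b.
  by move=> x Nx; rewrite conjgM (conj_cent cDc (subsetP sND x Nx)).
have Nb : b \in 'N(N) := subsetP nNB b Bb.
have leN : #|N| <= m.
  apply: leq_trans (hm Bb); apply: subset_leq_card; exact: commgSS.
have ltD : #|D'| < #|D|.
  apply: proper_card; rewrite properE sD'D /=; apply: contra nCb => h.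
  by rewrite -sub_cent1 (subset_trans h) ?subsetIr.
apply: (IH D' K' (W :|: N) (c * b) j.+1).
- by rewrite -ltnS (leq_trans ltD).
- exact: subset_trans sD'D sDP.
- apply: normsI nDB (subset_trans cbB _); exact: (normG 'C[b]%G).
- exact: subset_trans sK'K sKB.
- apply: leq_trans leB _; rewrite -(Lagrange sK'K) expnS -mulnA.
  apply: leq_mul (leqnn _) (leq_mul _ (leqnn _)).
  apply: leq_trans (index_cent (subset_trans sKB nNB)) _; exact: leq_fact.
- by rewrite subUset sWP.
- by rewrite centU subsetI (subset_trans sK'K cWK) subsetIr.
- by rewrite groupM.
- move=> w; rewrite inE => /orP[Ww | Nw].
    by rewrite fixW // inE WcW.
  by rewrite fixN // in_setU (memJ_norm _ Nb) Nw orbT.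
- rewrite groupM //; apply: subsetP cDc; exact: centS.
- set T := Tg W c; set T' := Tg (W :|: N) (c * b).
  have sTT' : T \subset T'.
    rewrite gen_subG; apply/subsetP=> _ /imsetP[w Ww ->].
    have -> : [~ w, c] = [~ w, c * b] by rewrite /commg fixW.
    by apply: mem_gen; apply: imset_f; rewrite inE Ww.
  have T'z : [~ n0, b] \in T'.
    have -> : [~ n0, b] = [~ n0, c * b] by rewrite /commg fixN.
    by apply: mem_gen; apply: imset_f; rewrite inE Nn0 orbT.
  have Dz : [~ n0, b] \in D by apply: (subsetP sND); rewrite mem_commg ?cycle_id ?(subsetP sND).
  have D'z : [~ n0, b] \notin D'.
    by apply: contra nCz; apply: subsetP; apply: subsetIr.
  have sI : (T' :&: D')%G \subset (T' :&: D)%G by apply: setIS.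
  have half : 2 * #|T' :&: D'| <= #|T' :&: D|.
    rewrite -(Lagrange sI) [X in X <= _]mulnC leq_pmul2l ?cardG_gt0 // indexg_gt1.
    apply/subsetPn; exists [~ n0, b]; by rewrite inE ?T'z ?Dz // inE T'z.
  have key : #|T| * #|T' :&: D| <= #|T'| * #|T :&: D|.
    rewrite (mul_cardG T (T' :&: D)%G) /= setIA (setIidPl sTT').
    by rewrite leq_mul2r subset_leq_card ?orbT // mul_subG // subsetIl.
  have a_gt0 : 0 < #|T :&: D| by apply: (cardG_gt0 (T :&: D)%G).
  move: hT key half; rewrite -/T expnS.
  set e := (2 ^ j)%N; set a := #|T :&: D|; set t := #|T|; set t' := #|T'|.
  set x := #|T' :&: D|; set y := #|T' :&: D'| => hT key half.
  have h1 : (e * x * a <= t' * a)%N.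
    by apply: leq_trans key; rewrite mulnAC leq_mul2r hT orbT.
  rewrite leq_pmul2r // in h1.
  apply: leq_trans h1; rewrite [(2 * e)%N]mulnC -mulnA leq_mul2l half orbT //.
- apply: subset_trans sPWD _; rewrite gen_subG subUset; apply/andP; split.
    by apply: sub_gen; apply: subset_trans (subsetUl W N) (subsetUl _ _).
  apply: subset_trans (C1 pD nDb p'b) _; apply: mul_subG.
    by apply: sub_gen; apply: subset_trans (subsetUr W N) _; apply: subsetUl.
  by apply: sub_gen; apply: subsetUr.
Qed.

Lemma abelian_bound : #|B| <= (m`!) ^ m.
Proof.
apply: (@process #|P| P B set0 1 0) => //.
- by rewrite expn0 muln1.
- exact: sub0set.
- by apply/subsetP=> x _; apply/centP=> y; rewrite inE.
- by move=> w; rewrite inE.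
- by rewrite expn0 mul1n subset_leq_card // subsetIl.
- by rewrite set0U genGid.
Qed.

End Abelian.

Lemma prod_if_bound (Kb L : nat) n : 0 < L ->
  \prod_(0 <= q < n) (if q <= Kb then L else 1) <= L ^ (minn n Kb.+1).
Proof.
move=> L0; elim: n => [|n IH]; first by rewrite big_nil.
rewrite big_nat_recr //=; case: (leqP n Kb) => h.
  have -> : minn n.+1 Kb.+1 = (minn n Kb.+1).+1.
    by lia.
  by rewrite expnSr leq_mul2r IH orbT.
rewrite muln1; apply: leq_trans IH _; rewrite leq_pexp2l //.
by lia.
Qed.

Lemma pgroup_bound (q : nat) (X S : {group gT}) Kb :
  (forall Y : {group gT}, Y \subset X -> abelian Y -> #|Y| <= Kb) ->
  q.-group S -> S \subset X -> #|S| <= Kb * Kb`!.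
Proof.
move=> hK qS sSX.
have h1 : ((1%G : {group gT}) <| S) && abelian (1%G : {group gT}) by rewrite normal1 /=; apply: abelian1.
have [Z maxZ _] := @maxgroup_exists gT (fun A : {group gT} => (A <| S) && abelian A) 1%G h1.
have /SCN_P[nsZS cZ] := max_SCN qS maxZ.
have sZS : Z \subset S := normal_sub nsZS.
have cZZ : abelian Z by have := maxgroupp maxZ; case/andP.
have leZ : #|Z| <= Kb := hK Z (subset_trans sZS sSX) cZZ.
rewrite -(Lagrange sZS); apply: leq_mul leZ _.
have -> : #|S : Z| = #|S : 'C_S(Z)| by rewrite cZ.
apply: leq_trans (index_cent (normal_norm nsZS)) _.
exact: leq_fact (hK Z (subset_trans sZS sSX) cZZ).
Qed.

Lemma group_bound (X : {group gT}) Kb :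
  (forall Y : {group gT}, Y \subset X -> abelian Y -> #|Y| <= Kb) ->
  #|X| <= (Kb * Kb`!) ^ Kb.+1.
Proof.
move=> hK; set L := (Kb * Kb`!)%N.
have primeK : forall q, prime q -> q %| #|X| -> q <= Kb.
  move=> q pq dq; have [x Xx ox] := Cauchy pq dq.
  rewrite -ox orderE hK ?cycle_abelian //; by rewrite cycle_subG.
have L0 : 0 < L.
  rewrite muln_gt0 fact_gt0 andbT; have := hK 1%G (sub1G X) (abelian1 _).
  by rewrite cards1.
rewrite -{1}(partnT (cardG_gt0 X)) /partn.
apply: (@leq_trans (\prod_(0 <= q < #|X|.+1) (if q <= Kb then L else 1))); last first.
  by apply: leq_trans (prod_if_bound Kb #|X|.+1 L0) _; rewrite leq_pexp2l // geq_minr.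
rewrite big_mkcond /=; apply: leq_prod => q _.
rewrite /=; case: (leqP q Kb) => hq.
  have [S sylS] := Sylow_exists q X.
  rewrite -p_part -(card_Hall sylS).
  exact: pgroup_bound hK (pHall_pgroup sylS) (pHall_sub sylS).
case: (posnP (logn q #|X|)) => [-> | h]; first by rewrite expn0.
move: h; rewrite logn_gt0 mem_primes => /and3P[pq _ dq].
by have := primeK q pq dq; rewrite leqNgt hq.
Qed.

Lemma comm_bound (P A : {group gT}) m : A \subset 'N(P) ->
  (forall a, a \in A -> #|[~: P, [set a]]| <= m) -> #|[~: P, A]| <= m ^ #|A|.
Proof.
move=> nPA hm.
have sPA : [~: P, A] \subset P by rewrite commg_subl.
suff : forall s : seq gT, all (mem A) s -> #|[~: P, [set x in s]]| <= m ^ size s.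
  by move/(_ (enum A)); rewrite set_enum -cardE; apply; apply/allP=> x; rewrite mem_enum.
elim=> [|a s IH] /=.
  move=> _; rewrite expn0; set S := [set x in [::]].
  have -> : S = set0 by apply/setP=> x; rewrite !inE.
  have -> : [~: P, set0] = 1.
    by apply/trivgP; rewrite gen_subG; apply/subsetP=> z /imset2P[x y _ Hy]; rewrite inE in Hy.
  by rewrite cards1.
case/andP=> Aa As; set S := [set x in s].
have sSA : S \subset A by apply/subsetP=> x; rewrite inE => /(allP As).
have eS : [set x in a :: s] = [set a] :|: S by apply/setP=> x; rewrite !inE.
set H := [~: P, [set a]]%G; set K := [~: P, S]%G.
have sHP : H \subset P by apply: subset_trans sPA; apply: commgSS; rewrite ?sub1set.
have nKH : H \subset 'N(K) by apply: subset_trans sHP _; apply: commg_norml.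
have : #|[~: P, [set x in a :: s]]| <= #|H * K|.
  apply: subset_leq_card; rewrite -norm_joinEl // eS gen_subG.
  apply/subsetP=> z /imset2P[x y Px Hy ->]; move: Hy; rewrite inE => /orP[/set1P -> | Sy].
    by apply: mem_gen; apply/setUP; left; apply: mem_commg; rewrite ?set11.
  by apply: mem_gen; apply/setUP; right; apply: mem_commg.
move/leq_trans; apply.
apply: (@leq_trans (#|H| * #|K|)).
  by rewrite mul_cardG leq_pmulr ?cardG_gt0.
by rewrite expnS leq_mul ?hm ?IH.
Qed.

Definition Kb m := (m`! ^ m)%N.
Definition bA m := ((Kb m * (Kb m)`!) ^ (Kb m).+1)%N.
Definition fB m := (bA m + m ^ bA m)%N.

Theorem internal_main (p : nat) (P A : {group gT}) m :
  p.-group P -> p^'.-group A -> A \subset 'N(P) -> 'C_A(P) = 1 ->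
  (forall a, a \in A -> #|[~: P, [set a]]| <= m) -> 0 < m ->
  #|A| <= fB m /\ #|[~: P, A]| <= fB m.
Proof.
move=> pP p'A nPA faith hm m0.
have hA : #|A| <= bA m.
  apply: group_bound => Y sYA cYY.
  apply: (@abelian_bound p P Y m) => //.
  - exact: pgroupS sYA p'A.
  - exact: subset_trans sYA nPA.
  - by apply/trivgP; rewrite -faith setSI.
  - move=> c Yc; have Ac := subsetP sYA c Yc.
    apply: leq_trans (hm c Ac); apply: subset_leq_card.
    by apply: commg_cycle_sub; apply: (subsetP nPA).
split; first by apply: leq_trans hA _; apply: leq_addr.
apply: leq_trans (comm_bound nPA hm) _.
apply: leq_trans (leq_addl (bA m) _); exact: leq_pexp2l.
Qed.

End Internal.

Theorem lemma2p4 :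
  exists f : nat -> nat,
    forall (p : nat) (gT : finGroupType) (P : {group gT}) (m : nat)
           (A : {group {perm gT}}),
      prime p -> p.-group P -> (0 < m)%N ->
      A \subset Aut P -> p^'.-group A ->
      (forall a, a \in A -> (#|commAut P a| <= m)%N) ->
      (#|A| <= f m)%N /\ (#|commAutS P A| <= f m)%N.
Proof.
exists fB => p gT P m A pr pP m0 sAut p'A hm.
pose to := aut_groupAction P.
have injG := injm_sdpair1 to; have injA := injm_sdpair2 to.
have actE : forall x a, x \in P -> a \in Aut P -> (sdpair1 to) (a x) = (sdpair1 to) x ^ (sdpair2 to) a.
  by move=> x a Px Aa; rewrite -sdpair_act.
have commE : forall x a, x \in P -> a \in Aut P -> (sdpair1 to) (x^-1 * a x) = [~ (sdpair1 to) x, (sdpair2 to) a].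
  by move=> x a Px Aa; rewrite morphM ?groupV ?Aut_closed // morphV //; congr (_ * _); apply: actE.
have := @internal_main _ p ((sdpair1 to) @* P)%G ((sdpair2 to) @* A)%G m.
case.
- exact: morphim_pgroup.
- exact: morphim_pgroup.
- exact: subset_trans (morphimS _ sAut) (im_sdpair_norm to).
- apply/trivgP/subsetP=> u /setIP[/morphimP[a _ Aa ->] cu].
  have Auta := subsetP sAut a Aa.
  suff -> : a = 1 by rewrite morph1 inE.
  apply/permP=> x; rewrite perm1.
  case: (boolP (x \in P)) => Px; last first.
    by apply: (out_perm (x := x)) Px; move: Auta; rewrite inE => /andP[].
  apply: (injmP injG); rewrite ?Aut_closed //.
  transitivity (sdpair1 to x ^ sdpair2 to a); first exact: actE.
  apply/conjg_fixP/commgP; have cu2 : sdpair2 to a \in 'C(sdpair1 to @* P) := cu.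
  by apply: commute_sym; apply: (centP cu2); apply: mem_morphim.
- move=> _ /morphimP[a _ Aa ->]; have Auta := subsetP sAut a Aa.
  apply: leq_trans (hm a Aa).
  have sC : commAut P a \subset P.
    by rewrite gen_subG; apply/subsetP=> _ /imsetP[x Px ->]; rewrite groupM ?groupV ?Aut_closed.
  rewrite -(card_injm injG sC); apply: subset_leq_card.
  rewrite gen_subG; apply/subsetP=> _ /imset2P[_ b /morphimP[x _ Px ->] /set1P -> ->].
  rewrite -commE //; apply: mem_morphim; first by rewrite groupM ?groupV ?Aut_closed.
  by rewrite /commAut mem_gen //; apply/imsetP; exists x.
- exact: m0.
move=> h1 h2; split; first by rewrite -(card_injm injA sAut).
have sC : commAutS P A \subset P.
  rewrite gen_subG; apply/subsetP=> _ /imset2P[x a Px Aa ->].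
  by rewrite groupM ?groupV ?Aut_closed ?(subsetP sAut).
rewrite -(card_injm injG sC); apply: leq_trans h2; apply: subset_leq_card.
rewrite /commAutS morphim_gen; last exact: subset_trans (subset_gen _) sC.
rewrite gen_subG; apply/subsetP=> _ /morphimP[y _ /imset2P[x a Px Aa ->] ->].
have Auta := subsetP sAut a Aa.
have -> : sdpair1_morphism to (x^-1 * a x) = [~ sdpair1 to x, sdpair2 to a] by apply: commE.
by apply: mem_commg; apply: mem_morphim.
Qed.
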